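(* Let $\boldsymbol{\mathcal{D}} = \begin{pmatrix}\boldsymbol{W}_p\\ \boldsymbol{U}_f \\ \boldsymbol{Y}_f\end{pmatrix}\in\mathbb{R}^{L(m+p)\times \ell}$ be a data matrix with full row rank, with LQ decomposition $\boldsymbol{\mathcal{D}} = \begin{pmatrix} \boldsymbol{L}_{11} & \boldsymbol{0} & \boldsymbol{0} & \boldsymbol{0} \\ \boldsymbol{L}_{21} & \boldsymbol{L}_{22} & \boldsymbol{0} & \boldsymbol{0} \\ \boldsymbol{L}_{31} & \boldsymbol{L}_{32} & \boldsymbol{L}_{33} & \boldsymbol{0} \end{pmatrix}\begin{pmatrix}\boldsymbol{Q}_1\\ \boldsymbol{Q}_2\\ \boldsymbol{Q}_3\\ \boldsymbol{Q}_4\end{pmatrix}$ as described in the context, and let $\lambda_a>0$. Then DeePC with regularization $h(\boldsymbol{a}) = \lambda_a \|\boldsymbol{a}\|_2^2$ is equivalent to $\boldsymbol{\gamma}$-DDPC with regularization $\tilde h(\boldsymbol{\gamma}) = \lambda_a \|\boldsymbol{\gamma}_2\|_2^2 + \lambda_a \|\boldsymbol{\gamma}_3\|_2^2$.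
   Context: Data: $m$ inputs, $p$ outputs, past horizon $N_p$, future horizon $N_f$, $L=N_p+N_f$, and $\ell$ data trajectories. The data matrix is partitioned as $\boldsymbol{\mathcal{D}} = \begin{pmatrix}\boldsymbol{W}_p\\ \boldsymbol{U}_f \\ \boldsymbol{Y}_f\end{pmatrix}$ with $\boldsymbol{W}_p\in\mathbb{R}^{N_p(m+p)\times\ell}$ (past inputs and outputs), $\boldsymbol{U}_f\in\mathbb{R}^{mN_f\times \ell}$, $\boldsymbol{Y}_f\in\mathbb{R}^{pN_f\times\ell}$; it is assumed to have full row rank. The LQ decomposition has lower block-triangular factor with non-singular square diagonal blocks $\boldsymbol{L}_{11},\boldsymbol{L}_{22},\boldsymbol{L}_{33}$ and $\boldsymbol{Q}=\begin{pmatrix}\boldsymbol{Q}_1^\top & \boldsymbol{Q}_2^\top&\boldsymbol{Q}_3^\top&\boldsymbol{Q}_4^\top\end{pmatrix}^\top\in\mathbb{R}^{\ell\times\ell}$ orthogonal (so $\boldsymbol{Q}_i\boldsymbol{Q}_i^\top=\boldsymbol{I}$, $\boldsymbol{Q}_i\boldsymbol{Q}_j^\top=\boldsymbol{0}$ for $i\neq j$); $\boldsymbol{\gamma}_i := \boldsymbol{Q}_i\boldsymbol{a}$. Given current past I/O data $\boldsymbol{\xi}\in\mathbb{R}^{N_p(m+p)}$, a cost $J(\boldsymbol{\xi},\mathbf{u}_f,\mathbf{y}_f)$ and constraint sets $\mathcal{U}\subseteq\mathbb{R}^{mN_f}$, $\mathcal{Y}\subseteq\mathbb{R}^{pN_f}$: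 DeePC with regularization $h$ is the problem $\min_{\mathbf{u}_f,\mathbf{y}_f,\boldsymbol{a}} J(\boldsymbol{\xi},\mathbf{u}_f,\mathbf{y}_f)+h(\boldsymbol{a})$ s.t. $(\boldsymbol{\xi};\mathbf{u}_f;\mathbf{y}_f)=\boldsymbol{\mathcal{D}}\boldsymbol{a}$, $(\mathbf{u}_f,\mathbf{y}_f)\in\mathcal{U}\times\mathcal{Y}$. $\boldsymbol{\gamma}$-DDPC with regularization $\tilde h$ is the problem $\min_{\mathbf{u}_f,\mathbf{y}_f,\boldsymbol{\gamma}_2,\boldsymbol{\gamma}_3} J(\boldsymbol{\xi},\mathbf{u}_f,\mathbf{y}_f)+\tilde h(\boldsymbol{\gamma})$ s.t. $\boldsymbol{\gamma}_1=\boldsymbol{L}_{11}^{-1}\boldsymbol{\xi}$, $\mathbf{u}_f = \boldsymbol{L}_{21}\boldsymbol{\gamma}_1+\boldsymbol{L}_{22}\boldsymbol{\gamma}_2$, $\mathbf{y}_f=\boldsymbol{L}_{31}\boldsymbol{\gamma}_1+\boldsymbol{L}_{32}\boldsymbol{\gamma}_2+\boldsymbol{L}_{33}\boldsymbol{\gamma}_3$, $(\mathbf{u}_f,\mathbf{y}_f)\in\mathcal{U}\times\mathcal{Y}$ (i.e., $\boldsymbol{\gamma}_4=\boldsymbol{0}$ is fixed). Two such optimal control problems are called equivalent if, for every $\boldsymbol{\xi}$, they yield the same optimal predicted input/output trajectories $(\mathbf{u}_f^\ast,\mathbf{y}_f^\ast)$ (not necessarily the same optimal cost). *)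

(* Defs.v *)
From HB Require Import structures.
From mathcomp Require Import all_boot all_order all_algebra.
Set Implicit Arguments. Unset Strict Implicit. Unset Printing Implicit Defensive.
Import Order.TTheory GRing.Theory Num.Theory.
Local Open Scope ring_scope.

Section DDPC.
Variable R : realFieldType.

Definition sqnorm n (v : 'cV[R]_n) : R := \sum_(i < n) (v i 0) ^+ 2.

(* Block dimensions:
   n1 = N_p (m+p) (past I/O), n2 = m N_f (future inputs),
   n3 = p N_f (future outputs), n4 = l - (n1+n2+n3);
   the number of data trajectories is l = n1 + (n2 + (n3 + n4)). *)
Variables n1 n2 n3 n4 : nat.
Notation l := (n1 + (n2 + (n3 + n4)))%N.

Definition Qstack (Q1 : 'M[R]_(n1, l)) (Q2 : 'M[R]_(n2, l))
  (Q3 : 'M[R]_(n3, l)) (Q4 : 'M[R]_(n4, l)) : 'M[R]_l :=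
  col_mx Q1 (col_mx Q2 (col_mx Q3 Q4)).

Definition Dmat (Wp : 'M[R]_(n1, l)) (Uf : 'M[R]_(n2, l)) (Yf : 'M[R]_(n3, l))
  : 'M[R]_(n1 + (n2 + n3), l) := col_mx Wp (col_mx Uf Yf).

Definition Lmat (L11 : 'M[R]_n1) (L21 : 'M[R]_(n2, n1)) (L22 : 'M[R]_n2)
  (L31 : 'M[R]_(n3, n1)) (L32 : 'M[R]_(n3, n2)) (L33 : 'M[R]_n3)
  : 'M[R]_(n1 + (n2 + n3), l) :=
  col_mx (row_mx L11 (0 : 'M[R]_(n1, n2 + (n3 + n4))))
    (col_mx (row_mx L21 (row_mx L22 (0 : 'M[R]_(n2, n3 + n4))))
            (row_mx L31 (row_mx L32 (row_mx L33 (0 : 'M[R]_(n3, n4)))))).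

Variables (J : 'cV[R]_n1 -> 'cV[R]_n2 -> 'cV[R]_n3 -> R)
          (Uset : 'cV[R]_n2 -> Prop) (Yset : 'cV[R]_n3 -> Prop)
          (lam : R).

Definition deepc_feas (D : 'M[R]_(n1 + (n2 + n3), l)) (xi : 'cV[R]_n1)
  (u : 'cV[R]_n2) (y : 'cV[R]_n3) (a : 'cV[R]_l) : Prop :=
  col_mx xi (col_mx u y) = D *m a /\ Uset u /\ Yset y.

Definition deepc_cost (xi : 'cV[R]_n1) (u : 'cV[R]_n2) (y : 'cV[R]_n3)
  (a : 'cV[R]_l) : R := J xi u y + lam * sqnorm a.

Definition deepc_opt_traj D xi u y : Prop :=
  exists a, deepc_feas D xi u y a /\
    forall u' y' a', deepc_feas D xi u' y' a' ->
      deepc_cost xi u y a <= deepc_cost xi u' y' a'.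

Definition gddpc_feas (L11 : 'M[R]_n1) (L21 : 'M[R]_(n2, n1)) (L22 : 'M[R]_n2)
  (L31 : 'M[R]_(n3, n1)) (L32 : 'M[R]_(n3, n2)) (L33 : 'M[R]_n3)
  (xi : 'cV[R]_n1) (u : 'cV[R]_n2) (y : 'cV[R]_n3)
  (g2 : 'cV[R]_n2) (g3 : 'cV[R]_n3) : Prop :=
  let g1 := invmx L11 *m xi in
  u = L21 *m g1 + L22 *m g2 /\
  y = L31 *m g1 + L32 *m g2 + L33 *m g3 /\
  Uset u /\ Yset y.

Definition gddpc_cost (xi : 'cV[R]_n1) (u : 'cV[R]_n2) (y : 'cV[R]_n3)
  (g2 : 'cV[R]_n2) (g3 : 'cV[R]_n3) : R :=
  J xi u y + (lam * sqnorm g2 + lam * sqnorm g3).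

Definition gddpc_opt_traj L11 L21 L22 L31 L32 L33 xi u y : Prop :=
  exists g2 g3, gddpc_feas L11 L21 L22 L31 L32 L33 xi u y g2 g3 /\
    forall u' y' g2' g3', gddpc_feas L11 L21 L22 L31 L32 L33 xi u' y' g2' g3' ->
      gddpc_cost xi u y g2 g3 <= gddpc_cost xi u' y' g2' g3'.

End DDPC.

(* Main.v *)
Require Import Defs.
From HB Require Import structures.
From mathcomp Require Import all_boot all_order all_algebra.
From mathcomp Require Import ring lra.
Import Order.TTheory GRing.Theory Num.Theory.
Local Open Scope ring_scope.

Section Gen.
Variable R : realFieldType.

Lemma sqnorm_ge0 n (v : 'cV[R]_n) : 0 <= sqnorm v.
Proof. by apply: sumr_ge0 => i _; rewrite sqr_ge0. Qed.

Lemma sqnorm0 n : sqnorm (0 : 'cV[R]_n) = 0.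
Proof. by rewrite /sqnorm big1 // => i _; rewrite mxE expr2 mulr0. Qed.

Lemma sqnorm_col n k (a : 'cV[R]_n) (b : 'cV[R]_k) :
  sqnorm (col_mx a b) = sqnorm a + sqnorm b.
Proof. by rewrite /sqnorm big_split_ord /=; congr (_ + _); apply: eq_bigr => i _; rewrite ?col_mxEu ?col_mxEd. Qed.

Lemma sqnormE n (v : 'cV[R]_n) : sqnorm v = (v^T *m v) 0 0.
Proof. by rewrite /sqnorm mxE; apply: eq_bigr => i _; rewrite mxE expr2. Qed.

Lemma sqnorm_orth n (Q : 'M[R]_n) (a : 'cV[R]_n) : Q^T *m Q = 1%:M ->
  sqnorm (Q *m a) = sqnorm a.
Proof.
by move=> HQ; rewrite !sqnormE trmx_mul -mulmxA (mulmxA Q^T) HQ mul1mx.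
Qed.

Variables n1 n2 n3 n4 : nat.

Lemma Lmat_mul (L11 : 'M[R]_n1) (L21 : 'M[R]_(n2, n1)) (L22 : 'M[R]_n2)
  (L31 : 'M[R]_(n3, n1)) (L32 : 'M[R]_(n3, n2)) (L33 : 'M[R]_n3)
  (g1 : 'cV_n1) (g2 : 'cV_n2) (g3 : 'cV_n3) (g4 : 'cV_n4) :
  Lmat n4 L11 L21 L22 L31 L32 L33 *m col_mx g1 (col_mx g2 (col_mx g3 g4)) =
  col_mx (L11 *m g1) (col_mx (L21 *m g1 + L22 *m g2) (L31 *m g1 + L32 *m g2 + L33 *m g3)).
Proof.
by rewrite /Lmat !mul_col_mx !mul_row_col !mul0mx !addr0 !addrA.
Qed.

Lemma gen (Wp : 'M[R]_(n1, n1 + (n2 + (n3 + n4)))) (Uf : 'M[R]_(n2, n1 + (n2 + (n3 + n4))))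
  (Yf : 'M[R]_(n3, n1 + (n2 + (n3 + n4))))
  (L11 : 'M[R]_n1) (L21 : 'M[R]_(n2, n1)) (L22 : 'M[R]_n2)
  (L31 : 'M[R]_(n3, n1)) (L32 : 'M[R]_(n3, n2)) (L33 : 'M[R]_n3)
  (Q1 : 'M[R]_(n1, n1 + (n2 + (n3 + n4)))) (Q2 : 'M[R]_(n2, n1 + (n2 + (n3 + n4))))
  (Q3 : 'M[R]_(n3, n1 + (n2 + (n3 + n4)))) (Q4 : 'M[R]_(n4, n1 + (n2 + (n3 + n4))))
  (J : 'cV[R]_n1 -> 'cV[R]_n2 -> 'cV[R]_n3 -> R)
  (Uset : 'cV[R]_n2 -> Prop) (Yset : 'cV[R]_n3 -> Prop) (lam : R) :
  Dmat Wp Uf Yf = Lmat n4 L11 L21 L22 L31 L32 L33 *m Qstack Q1 Q2 Q3 Q4 ->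
  L11 \in unitmx ->
  Qstack Q1 Q2 Q3 Q4 *m (Qstack Q1 Q2 Q3 Q4)^T = 1%:M ->
  (Qstack Q1 Q2 Q3 Q4)^T *m Qstack Q1 Q2 Q3 Q4 = 1%:M ->
  0 <= lam ->
  forall xi u y,
    deepc_opt_traj J Uset Yset lam (Dmat Wp Uf Yf) xi u y <->
    gddpc_opt_traj J Uset Yset lam L11 L21 L22 L31 L32 L33 xi u y.
Proof.
set Q := Qstack Q1 Q2 Q3 Q4; set D := Dmat Wp Uf Yf.
move=> HD HL HQQt HQtQ Hlam xi u y.
have HQt : (Q^T)^T *m Q^T = 1%:M by rewrite trmxK.
have decomp : forall u' y' (a : 'cV[R]_(n1 + (n2 + (n3 + n4)))),
    col_mx xi (col_mx u' y') = D *m a ->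
    let g := Q *m a in
    [/\ usubmx g = invmx L11 *m xi,
        u' = L21 *m (invmx L11 *m xi) + L22 *m usubmx (dsubmx g),
        y' = L31 *m (invmx L11 *m xi) + L32 *m usubmx (dsubmx g)
             + L33 *m usubmx (dsubmx (dsubmx g)) &
        sqnorm a = sqnorm (invmx L11 *m xi) + (sqnorm (usubmx (dsubmx g))
             + (sqnorm (usubmx (dsubmx (dsubmx g))) + sqnorm (dsubmx (dsubmx (dsubmx g)))))].
  move=> u' y' a Ha g.
  have gE : g = col_mx (usubmx g) (col_mx (usubmx (dsubmx g))
                 (col_mx (usubmx (dsubmx (dsubmx g))) (dsubmx (dsubmx (dsubmx g))))).
    by rewrite !vsubmxK.
  have Ha' := Ha; rewrite HD -mulmxA -/g gE Lmat_mul in Ha'.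
  case/eq_col_mx: Ha' => Hxi /eq_col_mx [Hu' Hy'].
  have H1 : usubmx g = invmx L11 *m xi by rewrite Hxi mulKmx.
  split => //; first by rewrite Hu' H1.
    by rewrite Hy' H1.
  by rewrite -(sqnorm_orth _ Q a HQtQ) -/g {1}gE !sqnorm_col H1.
have constr : forall u' y' g2 g3,
    gddpc_feas Uset Yset L11 L21 L22 L31 L32 L33 xi u' y' g2 g3 ->
    let a := Q^T *m col_mx (invmx L11 *m xi) (col_mx g2 (col_mx g3 (0 : 'cV_n4))) in
    deepc_feas Uset Yset D xi u' y' a /\
    sqnorm a = sqnorm (invmx L11 *m xi) + (sqnorm g2 + sqnorm g3).
  move=> u' y' g2 g3 [Hu [Hy [HU HY]]] a; split; last first.
    by rewrite /a sqnorm_orth // !sqnorm_col sqnorm0 addr0.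
  split=> //.
  by rewrite HD /a -mulmxA (mulmxA Q) HQQt mul1mx Lmat_mul mulKVmx // Hu Hy.
split.
- move=> [a [Hf Hopt]].
  case: (Hf) => Ha [HU HY].
  case: (decomp _ _ _ Ha) => H1 Hu Hy Hs.
  exists (usubmx (dsubmx (Q *m a))), (usubmx (dsubmx (dsubmx (Q *m a)))).
  split; first by [].
  move=> u' y' g2' g3' Hf'.
  case: (constr _ _ _ _ Hf') => Hf2 Hs2.
  have := Hopt _ _ _ Hf2.
  rewrite /deepc_cost /gddpc_cost Hs Hs2.
  have h4 : 0 <= lam * sqnorm (dsubmx (dsubmx (dsubmx (Q *m a)))).
    by rewrite mulr_ge0 // sqnorm_ge0.
  rewrite !mulrDr => H.
  move: H h4.
  lra.
- move=> [g2 [g3 [Hf Hopt]]].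
  case: (constr _ _ _ _ Hf) => Hf2 Hs2.
  eexists; split; first exact: Hf2.
  move=> u' y' a' Hf'.
  case: (Hf') => Ha [HU HY].
  case: (decomp _ _ _ Ha) => H1 Hu Hy Hs.
  have : gddpc_feas Uset Yset L11 L21 L22 L31 L32 L33 xi u' y' (usubmx (dsubmx (Q *m a'))) (usubmx (dsubmx (dsubmx (Q *m a')))) by [].
  move/Hopt.
  rewrite /deepc_cost /gddpc_cost Hs Hs2.
  have h4 : 0 <= lam * sqnorm (dsubmx (dsubmx (dsubmx (Q *m a')))).
    by rewrite mulr_ge0 // sqnorm_ge0.
  rewrite !mulrDr => H.
  move: H h4.
  lra.
Qed.
End Gen.

Theorem proposition3 (R : realFieldType) (m p Np Nf n4 : nat)
  (Wp : 'M[R]_(Np * (m + p), Np * (m + p) + (m * Nf + (p * Nf + n4))))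
  (Uf : 'M[R]_(m * Nf, Np * (m + p) + (m * Nf + (p * Nf + n4))))
  (Yf : 'M[R]_(p * Nf, Np * (m + p) + (m * Nf + (p * Nf + n4))))
  (L11 : 'M[R]_(Np * (m + p))) (L21 : 'M[R]_(m * Nf, Np * (m + p)))
  (L22 : 'M[R]_(m * Nf)) (L31 : 'M[R]_(p * Nf, Np * (m + p)))
  (L32 : 'M[R]_(p * Nf, m * Nf)) (L33 : 'M[R]_(p * Nf))
  (Q1 : 'M[R]_(Np * (m + p), Np * (m + p) + (m * Nf + (p * Nf + n4))))
  (Q2 : 'M[R]_(m * Nf, Np * (m + p) + (m * Nf + (p * Nf + n4))))
  (Q3 : 'M[R]_(p * Nf, Np * (m + p) + (m * Nf + (p * Nf + n4))))
  (Q4 : 'M[R]_(n4, Np * (m + p) + (m * Nf + (p * Nf + n4))))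
  (J : 'cV[R]_(Np * (m + p)) -> 'cV[R]_(m * Nf) -> 'cV[R]_(p * Nf) -> R)
  (Uset : 'cV[R]_(m * Nf) -> Prop) (Yset : 'cV[R]_(p * Nf) -> Prop)
  (lam : R) :
  \rank (Dmat Wp Uf Yf) = (Np * (m + p) + (m * Nf + p * Nf))%N ->
  Dmat Wp Uf Yf = Lmat n4 L11 L21 L22 L31 L32 L33 *m Qstack Q1 Q2 Q3 Q4 ->
  L11 \in unitmx -> L22 \in unitmx -> L33 \in unitmx ->
  Qstack Q1 Q2 Q3 Q4 *m (Qstack Q1 Q2 Q3 Q4)^T = 1%:M ->
  (Qstack Q1 Q2 Q3 Q4)^T *m Qstack Q1 Q2 Q3 Q4 = 1%:M ->
  0 < lam ->
  forall (xi : 'cV[R]_(Np * (m + p))) (u : 'cV[R]_(m * Nf)) (y : 'cV[R]_(p * Nf)),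
    deepc_opt_traj J Uset Yset lam (Dmat Wp Uf Yf) xi u y <->
    gddpc_opt_traj J Uset Yset lam L11 L21 L22 L31 L32 L33 xi u y.
Proof.
move=> _ HD HL _ _ HQQt HQtQ Hlam.
apply: gen; [exact: HD|exact: HL|exact: HQQt|exact: HQtQ|exact: ltW Hlam].
Qed.
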